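(* Let $X$ be a compactum, let $n\geq2$, and let $f:X\to X$ be a function. Consider the statements: (1) $f$ is $TT_{++}$; (2) $F_n(f)$ is $TT_{++}$; (3) $SF_n(f)$ is $TT_{++}$. Then (2) and (3) are equivalent and (2) implies (1). Moreover, (1) does not imply (2) in general: there exist such $X$, $n$, $f$ with $f$ being $TT_{++}$ but $F_n(f)$ not $TT_{++}$.
   Context: A compactum is a nondegenerate compact, perfect, Hausdorff topological space. $F_n(X)$ is the set of nonempty subsets of $X$ with at most $n$ points, with the Vietoris topology; $F_1(X)=\{\{x\}:x\in X\}$; $F_n(f)(A)=f(A)$. $SF_n(X)=F_n(X)/F_1(X)$ is the quotient collapsing $F_1(X)$ to a point, $q$ the quotient map, $F_X=q(F_1(X))$, and $SF_n(f)(\chi)=q(F_n(f)(q^{-1}(\chi)))$ for $\chi\neq F_X$, $SF_n(f)(F_X)=F_X$. A function $g:Z\to Z$ is $TT_{++}$ if for every pair of nonempty open $U,V\subseteq Z$ the set $\{k\in\mathbb{N}: U\cap g^{-k}(V)\neq\emptyset\}$ is infinite. *)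

(* Defs.v *)
From HB Require Import structures.
From mathcomp Require Import all_boot all_order all_algebra generic_quotient.
From mathcomp Require Import all_classical all_reals.
From mathcomp Require Import topology_structure quotient_topology separation_axioms compact.
Set Implicit Arguments. Unset Strict Implicit. Unset Printing Implicit Defensive.
Local Open Scope classical_set_scope.
Local Open Scope quotient_scope.

Definition compactum (X : topologicalType) : Prop :=
  [/\ compact [set: X], hausdorff_space X, perfect_set [set: X] &
      exists x y : X, x <> y].

Definition TTpp (Z : topologicalType) (g : Z -> Z) : Prop :=
  forall U V : set Z, open U -> open V -> U !=set0 -> V !=set0 ->
    infinite_set [set k : nat | (0 < k)%N /\ (U `&` (iter k g) @^-1` V) !=set0].

Definition is_Fn (X : eqType) (n : nat) (A : set X) : Prop :=
  A !=set0 /\ exists s : seq X, (size s <= n)%N /\ A = [set` s].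

Definition Fn (X : topologicalType) (n : nat) : Type := {A : set X | is_Fn n A}.

HB.instance Definition _ (X : topologicalType) n := gen_eqMixin (Fn X n).
HB.instance Definition _ (X : topologicalType) n := gen_choiceMixin (Fn X n).

(* Vietoris topology: subbase { A | A ⊆ U } and { A | A ∩ U ≠ ∅ }, U open *)
Definition vietoris_D (X : topologicalType) : set (bool * set X) :=
  [set i | open i.2].
Definition vietoris_b (X : topologicalType) n (i : bool * set X) : set (Fn X n) :=
  if i.1 then [set A | proj1_sig A `<=` i.2]
  else [set A | (proj1_sig A `&` i.2) !=set0].

HB.instance Definition _ (X : topologicalType) n :=
  isSubBaseTopological.Build (Fn X n) (@vietoris_D X) (@vietoris_b X n).

Lemma is_Fn_image (X Y : eqType) n (f : X -> Y) (A : set X) :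
  is_Fn n A -> is_Fn n (f @` A).
Proof.
move=> [[x Ax] [s [hs eA]]]; split; first by exists (f x); exists x.
rewrite eA.
exists (map f s); split; first by rewrite size_map.
apply/seteqP; split=> y /=.
  by case=> z /= zs <-; apply: map_f.
by move=> /mapP [z zs ->]; exists z.
Qed.

Definition Fnf (X : topologicalType) n (f : X -> X) (A : Fn X n) : Fn X n :=
  exist _ (f @` proj1_sig A) (is_Fn_image f (proj2_sig A)).

Definition in_F1 (X : topologicalType) n (A : Fn X n) : Prop :=
  exists x : X, proj1_sig A = [set x].

Definition collapse_rel (X : topologicalType) n : rel (Fn X n) :=
  fun A B => `[< A = B \/ (in_F1 A /\ in_F1 B) >].

Lemma collapse_refl (X : topologicalType) n : reflexive (@collapse_rel X n).
Proof. by move=> A; apply/asboolP; left. Qed.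

Lemma collapse_sym (X : topologicalType) n : symmetric (@collapse_rel X n).
Proof.
move=> A B; apply/idP/idP => /asboolP [->|[h1 h2]]; apply/asboolP;
  by [left|right].
Qed.

Lemma collapse_trans (X : topologicalType) n : transitive (@collapse_rel X n).
Proof.
move=> B A C /asboolP [->//|[h1 h2]] /asboolP [<-|[_ h3]]; apply/asboolP;
  by right.
Qed.

Definition collapse_equiv_rel (X : topologicalType) n : equiv_rel (Fn X n) :=
  EquivRel (@collapse_rel X n) (@collapse_refl X n) (@collapse_sym X n)
    (@collapse_trans X n).

Definition SFn (X : topologicalType) n : Type :=
  quotient_topology {eq_quot (@collapse_equiv_rel X n)}.
HB.instance Definition _ (X : topologicalType) n := Topological.on (SFn X n).

(* SF_n(f): F_X is fixed; otherwise chi = q(A) for a unique A, sent to q(f(A)) *)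
Definition SFnf (X : topologicalType) n (f : X -> X) (chi : SFn X n) : SFn X n :=
  if `[< in_F1 (repr chi) >] then chi
  else \pi_(SFn X n) (Fnf f (repr chi)).

(* Main.v *)
Require Import Defs.
From HB Require Import structures.
From mathcomp Require Import all_boot all_order all_algebra generic_quotient.
From mathcomp Require Import all_classical all_reals finmap.
From mathcomp Require Import topology_structure quotient_topology separation_axioms compact.
From mathcomp Require Import topology cantor.
From mathcomp Require Import zify.
From Stdlib Require Import Lia.
Local Open Scope classical_set_scope.
Local Open Scope quotient_scope.
Section S.
Variables (X : topologicalType) (n : nat).
Lemma vopen_b {i : bool * set X} : open i.2 -> open (@vietoris_b X n i).
Proof.
move=> oi. exists [set @vietoris_b X n i].
  by move=> _ ->; apply: finI_from1.
by rewrite bigcup_set1.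
Qed.
Lemma vopen_nbhs (U : set (Fn X n)) A : open U -> U A ->
  exists D' : {fset (bool * set X)}, {subset D' <= @vietoris_D X} /\
    (\bigcap_(i in [set` D']) @vietoris_b X n i) A /\
    (\bigcap_(i in [set` D']) @vietoris_b X n i) `<=` U.
Proof.
case=> E sE eU; rewrite -eU => -[W EW WA].
have [D' sD' eW] := sE W EW.
have WA' : W A := WA.
have eW' : \bigcap_(i in [set` D']) @vietoris_b X n i = W := eW.
exists D'; split=> //; split; first by rewrite eW'.
move=> B WB; exists W => //; change (W B); by rewrite -eW'.
Qed.

Lemma is_Fn_seq (s : seq X) : s != [::] -> (size s <= n)%N -> is_Fn n [set` s].
Proof.
case: s => [//|x s] _ hs; split; first by exists x; rewrite /= inE eqxx.
by exists (x :: s).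
Qed.

Lemma is_Fn1 (x : X) : (0 < n)%N -> is_Fn n [set x].
Proof.
move=> hn; split; first by exists x.
exists [:: x]; split => //; apply/seteqP; split => z /=.
  by move=> ->; rewrite inE.
by rewrite inE => /eqP.
Qed.

Lemma iter_Fnf (f : X -> X) k (A : Fn X n) :
  proj1_sig (iter k (Fnf f) A) = iter k f @` proj1_sig A.
Proof.
elim: k => [|k IH] /=; first by rewrite image_id.
by rewrite IH image_comp.
Qed.

Lemma TT_Fn_f (f : X -> X) : (0 < n)%N -> TTpp (Fnf (n:=n) f) -> TTpp f.
Proof.
move=> hn hT U V oU oV [x Ux] [y Vy].
have := hT (@vietoris_b X n (true, U)) (@vietoris_b X n (true, V))
  (vopen_b (i:=(true,U)) oU) (vopen_b (i:=(true,V)) oV).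
have ne : forall W (z : X), W z -> (@vietoris_b X n (true, W)) !=set0.
  move=> W z Wz; exists (exist _ [set z] (is_Fn1 z hn)).
  by rewrite /vietoris_b /= => w ->.
move=> /(_ (ne _ _ Ux) (ne _ _ Vy)).
apply: sub_infinite_set => k [k0 [A [UA VA]]]; split => //.
have [[a Aa] _] := proj2_sig A.
exists a; split; first exact: UA.
move: VA; rewrite /vietoris_b /= iter_Fnf => VA; apply: VA; by exists a.
Qed.

Local Notation pi := (\pi_(SFn X n)).

Lemma piP (A B : Fn X n) : pi A = pi B <-> collapse_rel A B.
Proof.
split.
  by move=> h; apply/(eqmodP (@collapse_equiv_rel X n)).
by move=> /(eqmodP (@collapse_equiv_rel X n)).
Qed.

Lemma in_F1_Fnf (f : X -> X) (A : Fn X n) : in_F1 A -> in_F1 (Fnf f A).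
Proof. by case=> x eA; exists (f x); rewrite /= eA image_set1. Qed.

Lemma SFnf_pi (f : X -> X) (A : Fn X n) : SFnf f (pi A) = pi (Fnf f A).
Proof.
rewrite /SFnf.
have : collapse_rel (repr (pi A)) A by apply/piP; rewrite reprK.
case/asboolP => [eR | [h1 h2]].
  rewrite eR; case: asboolP => [h|//].
  by apply/piP/asboolP; right; split => //; exact: in_F1_Fnf.
rewrite asboolT //.
by apply/piP/asboolP; right; split => //; exact: in_F1_Fnf.
Qed.

Lemma iter_SFnf (f : X -> X) k (A : Fn X n) :
  iter k (SFnf f) (pi A) = pi (iter k (Fnf f) A).
Proof. by elim: k => [|k IH] //=; rewrite IH SFnf_pi. Qed.

Lemma F1_closed : hausdorff_space X -> open [set A : Fn X n | ~ in_F1 A].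
Proof.
move=> hX; rewrite openE => A nA.
have [a Aa] := (proj2_sig A).1.
have [b [Ab ba]] : exists b, proj1_sig A b /\ b != a.
  apply: contrapT => hne; apply: nA; exists a; apply/seteqP; split => z.
    by move=> Az; apply: contrapT => za; apply: hne; exists z; split => //; apply/eqP.
  by move=> /= ->.
have := hX; rewrite open_hausdorff => /(_ b a ba) [[O1 O2] /= [bO1 aO2] [oO1 oO2 /eqP O12]].
have {}bO1 := set_mem bO1; have {}aO2 := set_mem aO2.
apply: (@filterS _ _ _ (@vietoris_b X n (false, O1) `&` @vietoris_b X n (false, O2))).
  move=> B [[c [Bc O1c]] [d [Bd O2d]]] [z eB].
  rewrite eB /= in Bc Bd; subst c d.
  have : (O1 `&` O2) z by [].
  by rewrite O12.
apply: open_nbhs_nbhs; split.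
  by apply: openI; [apply: (vopen_b (i:=(false,O1))) | apply: (vopen_b (i:=(false,O2)))].
by split; [exists b | exists a].
Qed.

Lemma F1_dense : perfect_set [set: X] -> (2 <= n)%N ->
  forall (U : set (Fn X n)) A, open U -> U A -> exists B, U B /\ ~ in_F1 B.
Proof.
move=> hp hn U A oU UA.
have [hA|hA] := pselect (in_F1 A); last by exists A.
case: hA => x eA.
have [D' [sD' [DA DU]]] := vopen_nbhs _ _ oU UA.
have xi : forall i, i \in D' -> i.2 x.
  move=> [[] O] iD /=; have := DA _ iD; rewrite /vietoris_b /= eA.
    by apply.
  by case=> z [/= -> ].
have nO : nbhs x (\bigcap_(i in [set` D']) i.2).
  apply: filter_bigI => i iD; apply: open_nbhs_nbhs; split; last exact: xi.
  by have := set_mem (sD' _ iD).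
have [_ lp] := hp.
have : limit_point [set: X] x by rewrite lp.
move=> /(_ _ nO) [y [yx _ Oy]].
have hB : is_Fn n [set` [:: x; y]] by apply: is_Fn_seq.
exists (exist _ _ hB); split.
  apply: DU => -[[] O] iD; rewrite /vietoris_b /=.
    move=> z; change ((z \in [:: x; y]) -> O z); rewrite !inE => /orP [/eqP -> | /eqP ->]; first exact: (xi _ iD).
    exact: (Oy _ iD).
  by exists x; split; [rewrite /= inE eqxx | exact: (xi _ iD)].
case=> z /= eB.
have xB : [set` [:: x; y]] x by rewrite /= inE eqxx.
have yB : [set` [:: x; y]] y by rewrite /= !inE eqxx orbT.
rewrite eB in xB yB.
have xz : x = z := xB.
have yz : y = z := yB.
by move/eqP: yx; apply; rewrite xz yz.
Qed.

Lemma F_to_SF (f : X -> X) : TTpp (Fnf (n:=n) f) -> TTpp (SFnf (n:=n) f).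
Proof.
move=> hT U V oU oV [u Uu] [v Vv].
have := hT (pi @^-1` U) (pi @^-1` V) oU oV.
move=> /(_ (ex_intro _ (repr u) _) (ex_intro _ (repr v) _)).
rewrite /= !reprK => /(_ Uu Vv).
apply: sub_infinite_set => k [k0 [A [UA VA]]]; split => //.
exists (pi A); split => //.
by rewrite /preimage /= iter_SFnf.
Qed.

Lemma SF_to_F (f : X -> X) : hausdorff_space X -> perfect_set [set: X] ->
  (2 <= n)%N -> TTpp (SFnf (n:=n) f) -> TTpp (Fnf (n:=n) f).
Proof.
move=> hX hp hn hT U V oU oV [A UA] [B VB].
have satur : forall W : set (Fn X n), W `<=` [set A | ~ in_F1 A] ->
    pi @^-1` (pi @` W) = W.
  move=> W sW; apply/seteqP; split => C /=.
    case=> D WD /piP /asboolP [<-//| [hD _]].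
    by have := sW _ WD.
  by move=> WC; exists C.
have oU' : open (U `&` [set A | ~ in_F1 A]) by apply: openI => //; exact: F1_closed.
have oV' : open (V `&` [set A | ~ in_F1 A]) by apply: openI => //; exact: F1_closed.
have oUU : open (pi @` (U `&` [set A | ~ in_F1 A]) : set (SFn X n)).
  by change (open (pi @^-1` (pi @` (U `&` [set A | ~ in_F1 A])))); rewrite satur // => ? [].
have oVV : open (pi @` (V `&` [set A | ~ in_F1 A]) : set (SFn X n)).
  by change (open (pi @^-1` (pi @` (V `&` [set A | ~ in_F1 A])))); rewrite satur // => ? [].
have [A' [UA' nA']] := F1_dense hp hn _ _ oU UA.
have [B' [VB' nB']] := F1_dense hp hn _ _ oV VB.
have := hT _ _ oUU oVV (ex_intro _ (pi A') (ex_intro2 _ _ A' (conj UA' nA') erefl))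
  (ex_intro _ (pi B') (ex_intro2 _ _ B' (conj VB' nB') erefl)).
apply: sub_infinite_set => k [k0 [chi [[C [UC nC] <-]]]].
rewrite /preimage /= iter_SFnf => -[D [VD nD] /piP /asboolP eD].
split => //; exists C; split => //.
case: eD => [e|[hD _]]; last by [].
by rewrite /preimage /= -e.
Qed.
End S.
Lemma unbounded_infinite (S : set nat) :
  (forall N, exists k, (N < k)%N /\ S k) -> infinite_set S.
Proof.
move=> h /finite_fsetP [B eB].
have [k [Nk Sk]] := h (\max_(i <- B) i)%N.
have kB : k \in B by rewrite eB in Sk.
have := leq_bigmax_seq (P:=xpredT) (F:=id) k kB isT.
by rewrite leqNgt Nk.
Qed.

Definition cf (x : cantor_space) : cantor_space :=
  fun i => if i is j.+1 then x j.+2 else ~~ x 0%N.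

Lemma iter_cf0 k x : iter k cf x 0%N = x 0%N (+) odd k.
Proof. by elim: k => [|k IH] /=; [rewrite addbF | rewrite IH -addbN]. Qed.

Lemma iter_cfS k x j : iter k cf x j.+1 = x (j.+1 + k)%N.
Proof.
elim: k j => [|k IH] j /=; first by rewrite addn0.
by rewrite IH addSn addnS.
Qed.

Lemma cantor_compactum : compactum cantor_space.
Proof.
split; [exact: cantor_space_compact | exact: cantor_space_hausdorff
       | exact: cantor_perfect | ].
exists (fun _ => true), (fun _ => false) => h.
by have := congr1 (fun g : cantor_space => g 0%N) h.
Qed.

Lemma cf_TTpp : TTpp cf.
Proof.
move=> U V oU oV [x Ux] [y Vy].
pose kk N := ((x 0%N (+) y 0%N) + (N.+1).*2)%N.
pose z N : cantor_space := fun i => if (i < N)%N then x i else y (i - kk N)%N.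
have hz N : (0 < N)%N -> iter (kk N) cf (z N) = y.
  move=> N0; apply: functional_extensionality_dep => -[|j].
    rewrite iter_cf0 /z N0 /kk oddD odd_double addbF.
    by case: (x 0%N); case: (y 0%N).
  rewrite iter_cfS /z.
  have -> : (j.+1 + kk N < N)%N = false.
    by apply/negbTE; rewrite -leqNgt /kk -addnn; lia.
  by rewrite addnK.
have zc : z @ \oo --> x.
  apply/pointwise_cvgP => t.
  apply: (@cvg_near_cst _ _ (x t) (fun N => z N t)).
  exists t.+1 => // N /= tN.
  by rewrite /z ifT.
have := zc U (open_nbhs_nbhs (conj oU Ux)).
case=> N0 _ hN0.
apply: unbounded_infinite => M.
pose N := maxn (maxn N0 M) 1.
exists (kk N); split.
  rewrite /kk /N; lia.
split; first by rewrite /kk; lia.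
exists (z N); split.
  apply: hN0; rewrite /N /=; lia.
by rewrite /preimage /= hz // /N; lia.
Qed.

Lemma open_C (b : bool) : open [set z : cantor_space | z 0%N = b].
Proof.
have pc : continuous (fun z : cantor_space => z 0%N) := @proj_continuous nat (fun _ => bool) 0%N.
exact: (proj1 (continuousP _) pc [set b] (discrete_open _)).
Qed.

Lemma is_Fn_seq_ (X : topologicalType) n (s : seq X) :
  s != [::] -> (size s <= n)%N -> is_Fn n [set` s].
Proof.
case: s => [//|x s] _ hs; split; first by exists x; rewrite /= inE eqxx.
by exists (x :: s).
Qed.

Lemma iter_Fnf' (X : topologicalType) n (f : X -> X) k (A : Fn X n) :
  proj1_sig (iter k (Fnf f) A) = iter k f @` proj1_sig A.
Proof.
elim: k => [|k IH] /=; first by rewrite image_id.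
by rewrite IH image_comp.
Qed.

Lemma cf_not : ~ TTpp (Fnf (n:=2) cf).
Proof.
move=> hT.
pose C b := [set z : cantor_space | z 0%N = b].
have h1 : is_Fn 2 [set` [:: (fun _ => false) : cantor_space]] by apply: is_Fn_seq_.
have h2 : is_Fn 2 [set` [:: (fun _ => false) : cantor_space; fun _ => true]] by apply: is_Fn_seq_.
have := hT (@vietoris_b _ 2 (true, C false))
  (@vietoris_b _ 2 (false, C false) `&` @vietoris_b _ 2 (false, C true)).
have oC := open_C.
move=> /(_ (vopen_b _ _ (i:=(true, C false)) (oC false))).
move=> /(_ (openI (vopen_b _ _ (i:=(false, C false)) (oC false))
                  (vopen_b _ _ (i:=(false, C true)) (oC true)))).
move=> /(_ (ex_intro _ (exist _ _ h1) _) (ex_intro _ (exist _ _ h2) _)).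
have ha : vietoris_b (n:=2) (true, C false) (exist _ _ h1).
  rewrite /vietoris_b /= => w; rewrite /= inE => /eqP ->; by [].
have hb : (vietoris_b (n:=2) (false, C false) `&` vietoris_b (n:=2) (false, C true)) (exist _ _ h2).
  split; rewrite /vietoris_b /=.
    by exists (fun _ => false); split => //; rewrite /= inE eqxx.
  by exists (fun _ => true); split => //; rewrite /= !inE eqxx orbT.
move=> /(_ ha hb) /infinite_setN0 [k [_ [A [UA [VA1 VA2]]]]].
move: VA1 VA2; rewrite /preimage /vietoris_b /= !iter_Fnf'.
move=> [_ [[a Aa <-] Ca]] [_ [[b Ab <-] Cb]].
move: Ca Cb; rewrite /C /= !iter_cf0 (UA _ Aa) (UA _ Ab) => ->.
by [].
Qed.


Theorem theorem20 :
  (forall (X : topologicalType) (n : nat) (f : X -> X),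
     compactum X -> (2 <= n)%N ->
     ((TTpp (Fnf (n:=n) f) <-> TTpp (SFnf (n:=n) f)) /\
      (TTpp (Fnf (n:=n) f) -> TTpp f))) /\
  (exists (X : topologicalType) (n : nat) (f : X -> X),
     [/\ compactum X, (2 <= n)%N, TTpp f & ~ TTpp (Fnf (n:=n) f)]).
Proof.
split.
  move=> X n f [_ hX hp _] hn; split.
    by split; [exact: F_to_SF | exact: SF_to_F].
  by apply: TT_Fn_f; apply: leq_trans hn.
exists cantor_space, 2%N, cf; split.
- exact: cantor_compactum.
- by [].
- exact: cf_TTpp.
- exact: cf_not.
Qed.
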